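(* Let $\alpha>0$, $u=\mathbf{1}_{[-\alpha,\alpha]}$, $\sigma>0$ with $\sigma^2\le\alpha^2/24$, and $$\mathcal{C}(\mathbf{x}) = \Big\langle\nabla_{\mathbf{x}}[\varphi^{(2)}_{\sigma^2}\ast uu^*](\mathbf{x}),\ \begin{bmatrix}0&-1\\1&0\end{bmatrix}\mathbf{x}\Big\rangle_{\ell^2}.$$ Then $\mathcal{C}(s,t)\ge0$ for every $\mathbf{x}=(s,t)$ with $0\le t\le s$.
   Context: $uu^*(s,t)=u(s)u(t)$; $\varphi^{(2)}_{\sigma^2}(\mathbf{x}) = (2\pi\sigma^2)^{-1}e^{-\|\mathbf{x}\|_2^2/(2\sigma^2)}$ and $\ast$ is convolution on $\mathbb{R}^2$. *)

(* Defs.v *)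
From HB Require Import structures.
From mathcomp Require Import all_boot all_order all_algebra.
From mathcomp Require Import all_classical all_reals all_analysis.
Set Implicit Arguments. Unset Strict Implicit. Unset Printing Implicit Defensive.
Import Order.TTheory GRing.Theory Num.Theory.
Import numFieldNormedType.Exports.
Local Open Scope classical_set_scope.
Local Open Scope ring_scope.

Section Defs.
Variable R : realType.

Definition phi2 (sigma2 : R) (x : R * R) : R :=
  (2 * pi * sigma2)^-1 * expR (- (x.1 ^+ 2 + x.2 ^+ 2) / (2 * sigma2)).

Definition u_ind (alpha : R) : R -> R := \1_(`[- alpha, alpha]%classic).

Definition uustar (u : R -> R) (x : R * R) : R := u x.1 * u x.2.

Definition conv2 (f g : R * R -> R) (x : R * R) : R :=
  Rintegral ((@lebesgue_measure R) \x (@lebesgue_measure R))%E setT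
    (fun y : R * R => f (x.1 - y.1, x.2 - y.2) * g y).

Definition grad2 (F : R * R -> R) (x : R * R) : R * R :=
  (derive1 (fun s => F (s, x.2)) x.1, derive1 (fun t => F (x.1, t)) x.2).

Definition dot2 (v w : R * R) : R := v.1 * w.1 + v.2 * w.2.

Definition rotJ (x : R * R) : R * R := (- x.2, x.1).

Definition Ccal (alpha sigma : R) (x : R * R) : R :=
  dot2 (grad2 (conv2 (phi2 (sigma ^+ 2)) (uustar (u_ind alpha))) x) (rotJ x).

End Defs.

(* Main.v *)
Require Import Defs.
From HB Require Import structures.
From mathcomp Require Import all_boot all_order all_algebra.
From mathcomp Require Import all_classical all_reals all_analysis.
From mathcomp Require Import measurable_realfun ring lra.
Set Implicit Arguments. Unset Strict Implicit. Unset Printing Implicit Defensive.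
Import Order.TTheory GRing.Theory Num.Theory.
Import numFieldNormedType.Exports.
Local Open Scope classical_set_scope.
Local Open Scope ring_scope.

Section S.
Variable R : realType.
Notation mu := (@lebesgue_measure R).

Lemma prod_int (f h : R -> R) : measurable_fun setT f -> measurable_fun setT h ->
  (forall x, 0 <= f x) -> (forall x, 0 <= h x) ->
  (\int[(mu \x mu)%E]_z ((f z.1 * h z.2)%:E) =
   (\int[mu]_x (f x)%:E) * (\int[mu]_y (h y)%:E))%E.
Proof.
move=> mf mh f0 h0.
rewrite (@fubini_tonelli1 _ _ _ _ _ mu mu (fun z : R * R => (f z.1 * h z.2)%:E)) /=; last 2 first.
- apply/measurable_EFinP; apply: measurable_funM.
  + exact: measurableT_comp mf measurable_fst.
  + exact: measurableT_comp mh measurable_snd.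
- by move=> z; rewrite lee_fin mulr_ge0.
rewrite /fubini_F /=.
under eq_integral => x _.
  rewrite (_ : (fun y => _) = (fun y => (f x)%:E * (h y)%:E)%E) //.
  rewrite ge0_integralZl_EFin //.
  over.
- by move=> y _; rewrite lee_fin.
- exact/measurable_EFinP.
rewrite /= ge0_integralZr//.
- exact/measurable_EFinP.
- by move=> x _; rewrite lee_fin.
- by apply: integral_ge0 => y _; rewrite lee_fin.
Qed.
End S.

Section P.
Variable R : realType.
Variables (al v : R).
Hypothesis v0 : 0 < v.

Lemma vn0 : v != 0. Proof. by rewrite gt_eqF. Qed.
Lemma v2n0 : 2 * v != 0. Proof. by rewrite mulf_neq0 // gt_eqF. Qed.
Local Hint Resolve vn0 v2n0 : core.

Definition gg (w : R) := expR (- (w ^+ 2) / (2 * v)).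
Definition cc (a : R) := expR a + expR (- a).
Definition KK (x y : R) := gg (x - y) + gg (x + y).
Definition ww (y : R) := expR ((y ^+ 2 - al ^+ 2) / (2 * v)).

Lemma cc_abs a : cc a = cc `|a|.
Proof.
rewrite /cc; case: (lerP 0 a) => a0; first by rewrite ger0_norm.
by rewrite ltr0_norm // opprK addrC.
Qed.

Lemma cc_mono a b : b ^+ 2 <= a ^+ 2 -> cc b <= cc a.
Proof.
move=> ba; rewrite (cc_abs a) (cc_abs b).
have hab : `|b| <= `|a| by rewrite -ler_sqr ?real_normK ?num_real // ?nnegrE.
move: (normr_ge0 a) (normr_ge0 b) hab.
move: `|a| `|b| => p q p0 q0 qp.
rewrite /cc.
have e1 : expR (- q) - expR (- p) = expR (- (p + q)) * (expR p - expR q).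
  by rewrite mulrBr -!expRD; congr (expR _ - expR _); ring.
have : 0 <= (expR p - expR q) * (1 - expR (- (p + q))).
  apply: mulr_ge0; first by rewrite subr_ge0 ler_expR.
  by rewrite subr_ge0 -expR0 ler_expR; lra.
rewrite mulrBr mulr1 mulrC -e1 => h; lra.
Qed.

Lemma gg2 a b : gg a * gg b = expR (- (a ^+ 2 + b ^+ 2) / (2 * v)).
Proof. rewrite /gg -expRD; congr expR; field; rewrite ?vn0 ?v2n0 //. Qed.

Lemma KK_prod s t y z : KK s y * KK t z =
  expR (- (s ^+ 2 + t ^+ 2 + y ^+ 2 + z ^+ 2) / (2 * v)) *
  (cc ((s * y + t * z) / v) + cc ((s * y - t * z) / v)).
Proof.
set Q := (- (s ^+ 2 + t ^+ 2 + y ^+ 2 + z ^+ 2) / (2 * v)).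
set p := (s * y + t * z) / v.
set q := (s * y - t * z) / v.
rewrite /KK /gg /cc mulrDl !mulrDr -!expRD.
have e1 : - (s - y) ^+ 2 / (2 * v) + - (t - z) ^+ 2 / (2 * v) = Q + p.
  by rewrite /Q /p; field.
have e2 : - (s - y) ^+ 2 / (2 * v) + - (t + z) ^+ 2 / (2 * v) = Q + q.
  by rewrite /Q /q; field.
have e3 : - (s + y) ^+ 2 / (2 * v) + - (t - z) ^+ 2 / (2 * v) = Q + - q.
  by rewrite /Q /q; field.
have e4 : - (s + y) ^+ 2 / (2 * v) + - (t + z) ^+ 2 / (2 * v) = Q + - p.
  by rewrite /Q /p; field.
rewrite e1 e2 e3 e4.
move: (expR (Q + p)) (expR (Q + q)) (expR (Q + - q)) (expR (Q + - p)) => A B C D.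
ring.
Qed.

Lemma ww_mono y z : z ^+ 2 <= y ^+ 2 -> ww z <= ww y.
Proof.
move=> h; rewrite /ww ler_expR ler_pM2r ?invr_gt0 //; first lra.
by rewrite mulr_gt0.
Qed.

Lemma pw s t y z : 0 <= t -> t <= s ->
  KK s y * (KK t z * ww z) + KK t y * ww y * KK s z <=
  KK s y * ww y * KK t z + KK t y * (KK s z * ww z).
Proof.
move=> t0 ts.
suff : 0 <= (ww y - ww z) * (KK s y * KK t z - KK t y * KK s z).
  move: (ww y) (ww z) (KK s y) (KK t z) (KK t y) (KK s z) => A B C D E F h.
  rewrite -subr_ge0; move: h.
  by rewrite (_ : (A - B) * (C * D - E * F) = C * A * D + E * (F * B) - (C * (D * B) + E * A * F)) //; ring.
have wyz : z ^+ 2 <= y ^+ 2 -> 0 <= ww y - ww z by move=> h; rewrite subr_ge0 ww_mono.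
have wzy : y ^+ 2 <= z ^+ 2 -> 0 <= ww z - ww y by move=> h; rewrite subr_ge0 ww_mono.
move: (ww y) (ww z) wyz wzy => A B wyz wzy.
rewrite KK_prod [KK t y * _]KK_prod.
have -> : (- (t ^+ 2 + s ^+ 2 + y ^+ 2 + z ^+ 2) / (2 * v)) =
          (- (s ^+ 2 + t ^+ 2 + y ^+ 2 + z ^+ 2) / (2 * v)) by congr (_ / _); ring.
have E10 : 0 < expR (- (s ^+ 2 + t ^+ 2 + y ^+ 2 + z ^+ 2) / (2 * v)) by apply: expR_gt0.
move: (expR _) E10 => E1 E10.
have st2 : t ^+ 2 <= s ^+ 2 by rewrite ler_sqr ?nnegrE //; lra.
have key : forall p q : R, (p ^+ 2 - q ^+ 2 = (s ^+ 2 - t ^+ 2) * (y ^+ 2 - z ^+ 2) / v ^+ 2) ->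
    (z ^+ 2 <= y ^+ 2 -> q ^+ 2 <= p ^+ 2) /\ (y ^+ 2 <= z ^+ 2 -> p ^+ 2 <= q ^+ 2).
  move=> p q e; have v2 : 0 < v ^+ 2 by rewrite exprn_gt0.
  split=> h.
  - rewrite -subr_ge0 e; apply: divr_ge0; last exact: ltW.
    by apply: mulr_ge0; lra.
  - rewrite -subr_ge0 -opprB e -mulNr; apply: divr_ge0; last exact: ltW.
    rewrite -mulrN; apply: mulr_ge0; lra.
have [k1 k1'] := key ((s * y + t * z) / v) ((t * y + s * z) / v) ltac:(field; rewrite ?vn0 //).
have [k2 k2'] := key ((s * y - t * z) / v) ((t * y - s * z) / v) ltac:(field; rewrite ?vn0 //).
have c1 := cc_mono (k1 _); have c2 := cc_mono (k2 _).
have c1' := cc_mono (k1' _); have c2' := cc_mono (k2' _).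
move: c1 c2 c1' c2'.
move: (cc ((s * y + t * z) / v)) (cc ((t * y + s * z) / v)) (cc ((s * y - t * z) / v)) (cc ((t * y - s * z) / v)) => P1 Q1 P2 Q2 c1 c2 c1' c2'.
case: (lerP (z ^+ 2) (y ^+ 2)) => hyz.
- apply: mulr_ge0; first exact: wyz.
  rewrite -mulrBr; apply: mulr_ge0; first exact: ltW.
  have := c1 hyz; have := c2 hyz; lra.
- have hyz' := ltW hyz.
  rewrite -mulrNN; apply: mulr_ge0; first by rewrite opprB; exact: wzy.
  rewrite -mulrBr -mulrN; apply: mulr_ge0; first exact: ltW.
  have := c1' hyz'; have := c2' hyz'; lra.
Qed.
End P.

Section Q.
Variable R : realType.
Notation mu := (@lebesgue_measure R).
Variables (al v : R).
Hypothesis v0 : 0 < v.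
Hypothesis al0 : 0 < al.

Lemma gg_cont : continuous (gg v).
Proof.
move=> x; rewrite /gg.
apply: (@continuous_comp _ _ _ (fun w : R => - (w ^+ 2) / (2 * v)) expR); last exact: continuous_expR.
apply: continuousM; last exact: cst_continuous.
by apply: continuousN; exact: exprn_continuous.
Qed.

Lemma ww_cont : continuous (ww al v).
Proof.
move=> x; rewrite /ww.
apply: (@continuous_comp _ _ _ (fun y : R => (y ^+ 2 - al ^+ 2) / (2 * v)) expR); last exact: continuous_expR.
apply: continuousM; last exact: cst_continuous.
by apply: continuousB; [exact: exprn_continuous|exact: cst_continuous].
Qed.

Lemma KK_cont x : continuous (KK v x).
Proof.
move=> y; rewrite /KK; apply: (@continuousD _ _ _ (fun y => gg v (x - y)) (fun y => gg v (x + y))).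
- apply: (@continuous_comp _ _ _ (fun y => x - y) (gg v)); last exact: gg_cont.
  by apply: continuousB; [exact: cst_continuous|exact: cvg_id].
- apply: (@continuous_comp _ _ _ (fun y => x + y) (gg v)); last exact: gg_cont.
  by apply: continuousD; [exact: cst_continuous|exact: cvg_id].
Qed.

Local Notation D := (`[- al, al]%classic : set R).

Lemma cint (f : R -> R) (a b : R) : continuous f -> mu.-integrable `[a, b] (EFin \o f).
Proof.
move=> cf; apply: continuous_compact_integrable; first exact: segment_compact.
exact: continuous_subspaceT.
Qed.

Lemma IE (f : R -> R) : continuous f ->
  (\int[mu]_y ((f y * \1_D y)%:E) = (\int[mu]_(y in D) f y)%:E)%E.
Proof.
move=> cf; rewrite /Rintegral fineK; last exact/integrable_fin_num/cint.
rewrite integral_mkcond /=; apply: eq_integral => y _.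
rewrite /patch /= indicE; case: ifPn => _ /=; by rewrite ?mulr1 ?mulr0.
Qed.

Lemma fold (f : R -> R) : continuous f ->
  \int[mu]_(y in D) f (- y) = \int[mu]_(y in D) f y.
Proof.
move=> cf; have := @integration_by_substitution_oppr R f (- al) al.
rewrite opprK => h; rewrite /Rintegral h //.
- by rewrite ge0_cp // ltW.
- exact: (continuous_subspaceT cf).
Qed.

Lemma cont_addc (f : R -> R) c : continuous f -> continuous (fun y => f (c + y)).
Proof.
move=> cf y; apply: (@continuous_comp _ _ _ (fun y => c + y) f); last exact: cf.
by apply: continuousD; [exact: cst_continuous|exact: cvg_id].
Qed.

Lemma cont_subc (f : R -> R) c : continuous f -> continuous (fun y => f (c - y)).
Proof.
move=> cf y; apply: (@continuous_comp _ _ _ (fun y => c - y) f); last exact: cf.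
by apply: continuousB; [exact: cst_continuous|exact: cvg_id].
Qed.

Lemma KG2 x : \int[mu]_(y in D) KK v x y = 2 * \int[mu]_(y in D) gg v (x - y).
Proof.
have c1 := cont_subc (c:=x) gg_cont.
rewrite /KK RintegralD //; [|exact: cint|exact/cint/cont_addc/gg_cont].
have -> : \int[mu]_(y in D) gg v (x + y) = \int[mu]_(y in D) gg v (x - - y).
  by apply: eq_Rintegral => y _; rewrite opprK.
by rewrite (fold c1) mulr_natl mulr2n.
Qed.

Lemma contM (f h : R -> R) : continuous f -> continuous h -> continuous (fun y => f y * h y).
Proof. by move=> cf ch y; apply: continuousM; [exact: cf|exact: ch]. Qed.

Lemma KA2 x : \int[mu]_(y in D) (KK v x y * ww al v y) = 2 * \int[mu]_(y in D) (gg v (x - y) * ww al v y).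
Proof.
have c1 := contM (cont_subc (c:=x) gg_cont) ww_cont.
rewrite /KK.
under eq_Rintegral do rewrite mulrDl.
rewrite RintegralD //; [|exact: cint|exact/cint/contM/ww_cont/cont_addc/gg_cont].
have -> : \int[mu]_(y in D) (gg v (x + y) * ww al v y) = \int[mu]_(y in D) (gg v (x - - y) * ww al v (- y)).
  by apply: eq_Rintegral => y _; rewrite opprK /ww sqrrN.
by rewrite (fold c1) mulr_natl mulr2n.
Qed.

Lemma KK_ge0 x y : 0 <= KK v x y.
Proof. by rewrite /KK /gg addr_ge0 // expR_ge0. Qed.

Lemma ww_ge0 y : 0 <= ww al v y.
Proof. exact: expR_ge0. Qed.

Lemma mD : measurable D. Proof. exact: measurable_itv. Qed.

Lemma mfI (c : R -> R) : continuous c -> measurable_fun setT (fun y => c y * \1_D y).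
Proof.
move=> cc; apply: measurable_funM; first exact: continuous_measurable_fun.
exact: measurable_indic mD.
Qed.

Lemma posI (c : R -> R) : (forall y, 0 <= c y) -> forall y, 0 <= c y * \1_D y.
Proof. by move=> c0 y; rewrite mulr_ge0 // indicE ler0n. Qed.

Lemma mprod (f h : R -> R) : measurable_fun setT f -> measurable_fun setT h ->
  measurable_fun setT (fun z : R * R => f z.1 * h z.2).
Proof.
move=> mf mh; apply: measurable_funM.
+ exact: measurableT_comp mf measurable_fst.
+ exact: measurableT_comp mh measurable_snd.
Qed.

Lemma int_sum2 (a b c d : R -> R) :
  continuous a -> continuous b -> continuous c -> continuous d ->
  (forall y, 0 <= a y) -> (forall y, 0 <= b y) -> (forall y, 0 <= c y) -> (forall y, 0 <= d y) ->
  (\int[(mu \x mu)%E]_z ((a z.1 * \1_D z.1) * (b z.2 * \1_D z.2) + (c z.1 * \1_D z.1) * (d z.2 * \1_D z.2))%:E =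
  ((\int[mu]_(y in D) a y) * (\int[mu]_(y in D) b y) + (\int[mu]_(y in D) c y) * (\int[mu]_(y in D) d y))%:E)%E.
Proof.
move=> ca cb cc cd a0 b0 c0 d0.
under eq_integral do rewrite EFinD.
rewrite ge0_integralD //; last 4 first.
- by move=> z _; rewrite lee_fin mulr_ge0 // posI.
- by apply/measurable_EFinP; apply: (mprod (f := fun y => a y * \1_D y) (h := fun y => b y * \1_D y)); exact: mfI.
- by move=> z _; rewrite lee_fin mulr_ge0 // posI.
- by apply/measurable_EFinP; apply: (mprod (f := fun y => c y * \1_D y) (h := fun y => d y * \1_D y)); exact: mfI.
rewrite (prod_int (f := fun y => a y * \1_D y) (h := fun y => b y * \1_D y)); try (exact: mfI); try (exact: posI).
rewrite (prod_int (f := fun y => c y * \1_D y) (h := fun y => d y * \1_D y)); try (exact: mfI); try (exact: posI).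
by rewrite !IE // -!EFinM -EFinD.
Qed.

Lemma msum2 (a b c d : R -> R) :
  continuous a -> continuous b -> continuous c -> continuous d ->
  measurable_fun setT (fun z : R * R => (a z.1 * \1_D z.1) * (b z.2 * \1_D z.2) + (c z.1 * \1_D z.1) * (d z.2 * \1_D z.2)).
Proof.
move=> ca cb cc cd.
apply: (@measurable_funD _ _ _ _ (fun z : R * R => (a z.1 * \1_D z.1) * (b z.2 * \1_D z.2)) (fun z : R * R => (c z.1 * \1_D z.1) * (d z.2 * \1_D z.2))).
- exact: (mprod (f := fun y => a y * \1_D y) (h := fun y => b y * \1_D y)) (mfI ca) (mfI cb).
- exact: (mprod (f := fun y => c y * \1_D y) (h := fun y => d y * \1_D y)) (mfI cc) (mfI cd).
Qed.

Lemma cheb s t : 0 <= t -> t <= s ->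
  (\int[mu]_(y in D) (KK v t y * ww al v y)) * (\int[mu]_(y in D) KK v s y) <=
  (\int[mu]_(y in D) (KK v s y * ww al v y)) * (\int[mu]_(y in D) KK v t y).
Proof.
move=> t0 ts.
have cs := KK_cont (x:=s); have ct := KK_cont (x:=t).
have csw := contM cs ww_cont; have ctw := contM ct ww_cont.
have ps : forall y, 0 <= KK v s y := fun y => @KK_ge0 s y.
have pt : forall y, 0 <= KK v t y := fun y => @KK_ge0 t y.
have psw : forall y, 0 <= KK v s y * ww al v y by move=> y; rewrite mulr_ge0 // ww_ge0.
have ptw : forall y, 0 <= KK v t y * ww al v y by move=> y; rewrite mulr_ge0 // ww_ge0.
have H := int_sum2 cs ctw ctw cs ps ptw ptw ps.
have H' := int_sum2 csw ct ct csw psw pt pt psw.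
have : ((\int[mu]_(y in D) KK v s y * \int[mu]_(y in D) (KK v t y * ww al v y) +
        \int[mu]_(y in D) (KK v t y * ww al v y) * \int[mu]_(y in D) KK v s y)%:E <=
       (\int[mu]_(y in D) (KK v s y * ww al v y) * \int[mu]_(y in D) KK v t y +
        \int[mu]_(y in D) KK v t y * \int[mu]_(y in D) (KK v s y * ww al v y))%:E)%E.
  rewrite -H -H'; apply: ge0_le_integral => //.
  - by move=> z _; rewrite lee_fin; apply: addr_ge0; apply: mulr_ge0; [exact: (posI ps) | exact: (posI ptw) | exact: (posI ptw) | exact: (posI ps)].
  - by apply/measurable_EFinP; exact: (msum2 cs ctw ctw cs).
  - by apply/measurable_EFinP; exact: (msum2 csw ct ct csw).
  - move=> [y z] _ /=; rewrite lee_fin.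
    have hp := pw al v0 y z t0 ts.
    have i0 : 0 <= \1_D y * \1_D z :> R by rewrite mulr_ge0 // indicE ler0n.
    move: hp i0; move: (KK v s y) (KK v t y) (KK v s z) (KK v t z) (ww al v y) (ww al v z) (\1_D y : R) (\1_D z : R).
    move=> a b c d e f i j hp i0.
    have := ler_wpM2r i0 hp.
    by rewrite (_ : (a * (d * f) + b * e * c) * (i * j) = a * i * (d * f * j) + b * e * i * (c * j)); [rewrite (_ : (a * e * d + b * (c * f)) * (i * j) = a * e * i * (d * j) + b * i * (c * f * j)) //; ring | ring].
rewrite lee_fin.
move: (\int[mu]_(y in D) KK v s y) (\int[mu]_(y in D) (KK v t y * ww al v y)) (\int[mu]_(y in D) (KK v s y * ww al v y)) (\int[mu]_(y in D) KK v t y) => a b c d.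
rewrite [b * a]mulrC [d * c]mulrC => h; lra.
Qed.
End Q.

Section R4.
Variable R : realType.
Notation mu := (@lebesgue_measure R).
Variables (al v : R).
Hypothesis v0 : 0 < v.
Hypothesis al0 : 0 < al.
Local Notation D := (`[- al, al]%classic : set R).

Lemma gw_exp x y : gg v (x - y) * ww al v y = expR (- (x ^+ 2 + al ^+ 2) / (2 * v) + x * y / v).
Proof.
rewrite /gg /ww -expRD; congr expR.
field; by rewrite ?(vn0 v0) ?(v2n0 v0).
Qed.

Lemma ww_al : ww al v al = 1.
Proof. by rewrite /ww subrr mul0r expR0. Qed.

Lemma ww_Nal : ww al v (- al) = 1.
Proof. by rewrite /ww sqrrN subrr mul0r expR0. Qed.

Lemma derive_affine (C k y : R) : is_derive y 1 (fun z : R => C + k * z) k.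
Proof.
have -> : (fun z : R => C + k * z) = (cst C + k *: (@id R)).
  by apply/funext => z.
have h := @is_deriveD R R R (cst C) (k *: (@id R)) y 1 0 (k *: 1).
rewrite add0r in h; rewrite [X in is_derive _ _ _ X](_ : k = k *: 1); last by rewrite /GRing.scale /= mulr1.
exact: h.
Qed.

Lemma Aint x : x != 0 ->
  \int[mu]_(y in D) (gg v (x - y) * ww al v y) = v / x * (gg v (x - al) - gg v (x + al)).
Proof.
move=> x0.
set C := - (x ^+ 2 + al ^+ 2) / (2 * v).
pose L := fun z : R => C + x / v * z.
pose F := fun y : R => v / x * expR (L y).
have dF : forall y : R, is_derive y (1:R) F (expR (L y)).
  move=> y.
  have -> : F = ((v / x) *: (expR \o L) : R -> R) by apply/funext => z.
  have h1 := derive_affine C (x / v) y.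
  have h2 : is_derive (L y) 1 expR (expR (L y)) by exact: is_derive_expR.
  have h3 := is_derive1_comp h2 h1.
  have h4 := is_deriveZ (v / x) h3.
  rewrite (_ : expR (L y) = (v / x) *: (expR (L y) * (x / v))) //.
  rewrite /GRing.scale /=; field; rewrite ?(vn0 v0) //.
have ef : forall y, gg v (x - y) * ww al v y = expR (L y).
  by move=> y; rewrite gw_exp /L; congr expR; congr (_ + _); rewrite mulrAC.
have cF : continuous F.
  move=> y; apply/differentiable_continuous/derivable1_diffP.
  by case: (dF y).
have := @continuous_FTC2 R (fun y => gg v (x - y) * ww al v y) F (- al) al.
move=> h; rewrite /Rintegral h; last 4 first.
- by rewrite gtrN.
- apply: continuous_subspaceT.
  have c1 := cont_subc (c:=x) (@gg_cont R v).
  have c2 := @ww_cont R al v.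
  exact: (contM c1 c2).
- split.
  + by move=> y _; case: (dF y).
  + exact: cvg_at_right_filter (cF _).
  + exact: cvg_at_left_filter (cF _).
- by move=> y _; have := dF y => dy; rewrite derive1E derive_val ef.
rewrite -EFinB /= /F /= -(ef al) -(ef (- al)) ww_al ww_Nal !mulr1 opprK.
by rewrite /GRing.scale /= mulrBr.
Qed.
End R4.

Section R5.
Variable R : realType.
Notation mu := (@lebesgue_measure R).
Variables (al v : R).
Hypothesis v0 : 0 < v.
Hypothesis al0 : 0 < al.
Local Notation D := (`[- al, al]%classic : set R).

Lemma der_cont (f : R -> R) : (forall y, derivable f y 1) -> continuous f.
Proof. by move=> df y; apply/differentiable_continuous/derivable1_diffP; exact: df. Qed.

Lemma shift_der (x y : R) : derivable (shift x) y 1.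
Proof. by have h := @is_derive_shift R y 1 x; exact: ex_derive. Qed.

Lemma shift_cont (x : R) : continuous (shift x).
Proof. by apply: der_cont => y; exact: shift_der. Qed.

Definition GG x := \int[mu]_(y in D) gg v (x - y).

Lemma GG_shift x : GG x = \int[mu]_(y in `[x - al, x + al]) gg v y.
Proof.
rewrite /GG -(fold al0 (cont_subc (c:=x) (@gg_cont R v))).
have d1 : (shift x)^`()%classic = cst 1.
  by apply/funext => z; have h := @is_derive_shift R z 1 x; rewrite derive1E derive_val.
have e : forall y, gg v (x - - y) = ((gg v \o shift x) * (shift x)^`()%classic) y.
  by move=> y; rewrite d1 mulrfctE /= mulr1 opprK addrC.
transitivity (\int[mu]_(y in D) ((gg v \o shift x) * (shift x)^`()%classic) y).
  by apply: eq_Rintegral => y _; exact: e.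
rewrite /Rintegral -integration_by_substitution_increasing.
- by rewrite /shift /= (addrC (- al)) (addrC al).
- by rewrite ge0_cp // ltW.
- by move=> a b _ _ ab; rewrite /shift ltrD2r.
- by move=> y _; rewrite d1; exact: cst_continuous.
- by rewrite d1; apply: is_cvg_cst.
- by rewrite d1; apply: is_cvg_cst.
- split.
  + by move=> y _; have h := @is_derive_shift R y 1 x; exact: ex_derive.
  + apply: cvg_at_right_filter. exact: shift_cont.
  + apply: cvg_at_left_filter; exact: shift_cont.
- exact: continuous_subspaceT (@gg_cont R v).
Qed.

Definition Phi (c z : R) := \int[mu]_(y in `[c, z]) gg v y.

Lemma Phi_split c a b : c <= a -> a <= b ->
  \int[mu]_(y in `[a, b]) gg v y = Phi c b - Phi c a.
Proof.
move=> ca ab; rewrite /Phi.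
rewrite (@Rintegral_itvB R (gg v) (BLeft c) (BRight b) a).
- rewrite Rintegral_itv_obnd_cbnd //.
  apply: (integrableS _ _ _ (cint a b (@gg_cont R v))) => //.
  by move=> y /=; rewrite !in_itv /= => /andP[ay yb]; rewrite (ltW ay) yb.
- by apply: cint; exact: gg_cont.
- by rewrite bnd_simp.
- by rewrite bnd_simp.
Qed.

Lemma Phi_der c z : c < z -> derivable (Phi c) z 1 /\ (Phi c)^`()%classic z = gg v z.
Proof.
move=> cz.
have := @continuous_FTC1_closed R (gg v) c z (z + 1).
apply.
- by rewrite ltrDl.
- by apply: cint; exact: gg_cont.
- exact: cz.
- exact: gg_cont.
Qed.

Lemma aux1 (x : R) : x - al - 1 < x + al.
Proof. have h := al0; lra. Qed.
Lemma aux2 (x : R) : x - al - 1 < x + - al.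
Proof. have h := al0; lra. Qed.

Lemma aux3 (x y : R) : x - 1 < y -> x - al - 1 <= y - al.
Proof. move=> h; lra. Qed.
Lemma aux4 (y : R) : y - al <= y + al.
Proof. have h := al0; lra. Qed.

Lemma GG_isder x : is_derive x (1:R) GG (gg v (x + al) - gg v (x - al)).
Proof.
set c := x - al - 1.
pose H := ((Phi c \o shift al) - (Phi c \o shift (- al)) : R -> R).
have dP : forall z : R, c < z -> is_derive z (1:R) (Phi c) (gg v z).
  move=> z cz; have [dd ee] := Phi_der cz.
  rewrite -ee derive1E; exact: derivableP dd.
have d1 : is_derive x (1:R) (Phi c \o shift al) (gg v (x + al) * 1).
  apply: is_derive1_comp; last exact: is_derive_shift.
  by apply: dP; rewrite /shift /c; apply: aux1.
have d2 : is_derive x (1:R) (Phi c \o shift (- al)) (gg v (x - al) * 1).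
  apply: is_derive1_comp; last exact: is_derive_shift.
  by apply: dP; rewrite /shift /c; apply: aux2.
have dH : is_derive x (1:R) H (gg v (x + al) - gg v (x - al)).
  by rewrite -[gg v (x + al)]mulr1 -[gg v (x - al)]mulr1; exact: is_deriveB.
apply: near_eq_is_derive dH.
have x1 : x - 1 < x by rewrite ltrBlDr ltrDl.
have hn := lt_nbhsr x1.
apply: filterS hn => y hy.
rewrite (GG_shift y) (@Phi_split c).
- by rewrite /H /=.
- by rewrite /c; apply: aux3.
- by apply: aux4.
Qed.

Lemma GG_der x : derivable GG x 1 /\ GG^`()%classic x = gg v (x + al) - gg v (x - al).
Proof.
have h := GG_isder x; split; first exact: ex_derive.
by rewrite derive1E derive_val.
Qed.
End R5.

Section R6.
Variable R : realType.
Notation mu := (@lebesgue_measure R).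
Variables (al v : R).
Hypothesis v0 : 0 < v.
Hypothesis al0 : 0 < al.
Local Notation D := (`[- al, al]%classic : set R).

Lemma conv_eq (x : R * R) :
  conv2 (phi2 v) (uustar (u_ind al)) x = (2 * pi * v)^-1 * GG al v x.1 * GG al v x.2.
Proof.
case: x => x1 x2 /=.
set k := (2 * pi * v)^-1.
have k0 : 0 <= k by rewrite invr_ge0 ltW // !mulr_gt0 // pi_gt0.
rewrite /conv2 /Rintegral /=.
have e : forall z : R * R, phi2 v (x1 - z.1, x2 - z.2) * uustar (u_ind al) z =
   k * ((gg v (x1 - z.1) * \1_D z.1) * (gg v (x2 - z.2) * \1_D z.2)).
  move=> z; rewrite /phi2 /uustar /u_ind /= -(gg2 v0).
  move: (gg v (x1 - z.1)) (gg v (x2 - z.2)) (\1_D z.1 : R) (\1_D z.2 : R) => a b c d.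
  by rewrite /k; ring.

have p1 : forall y, 0 <= gg v (x1 - y) * \1_D y.
  by apply: (posI al (c := fun y => gg v (x1 - y))) => y; exact: expR_ge0.
have p2 : forall y, 0 <= gg v (x2 - y) * \1_D y.
  by apply: (posI al (c := fun y => gg v (x2 - y))) => y; exact: expR_ge0.
under eq_integral do rewrite e EFinM.
rewrite ge0_integralZl_EFin //; last 2 first.
- by move=> z _; rewrite lee_fin; apply: mulr_ge0; [exact: p1|exact: p2].
- apply/measurable_EFinP.
  apply: (mprod (f := fun y => gg v (x1 - y) * \1_D y) (h := fun y => gg v (x2 - y) * \1_D y)).
  + by apply: mfI; exact: cont_subc (@gg_cont R v).
  + by apply: mfI; exact: cont_subc (@gg_cont R v).
rewrite (prod_int (f := fun y => gg v (x1 - y) * \1_D y) (h := fun y => gg v (x2 - y) * \1_D y)).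
- rewrite !IE; try (exact: cont_subc (@gg_cont R v)).
  by rewrite -!EFinM /= mulrA.
- by apply: mfI; exact: cont_subc (@gg_cont R v).
- by apply: mfI; exact: cont_subc (@gg_cont R v).
- exact: p1.
- exact: p2.
Qed.

Lemma Dform x : x != 0 -> gg v (x + al) - gg v (x - al) =
  - (x / v * \int[mu]_(y in D) (gg v (x - y) * ww al v y)).
Proof.
move=> x0; rewrite (Aint v0 al0 x0).
by field; rewrite x0 (vn0 v0).
Qed.

Lemma key (k s t : R) : 0 <= k -> 0 <= t -> t <= s ->
  0 <= (gg v (s + al) - gg v (s - al)) * (k * GG al v t) * - t +
       (gg v (t + al) - gg v (t - al)) * (k * GG al v s) * s.
Proof.
move=> k0 t0 ts.
have [->|tn0] := eqVneq t 0.
  rewrite add0r sub0r /gg sqrrN subrr mul0r mul0r oppr0 mulr0 add0r; exact: lexx.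
have tp : 0 < t by rewrite lt0r tn0.
have sp : 0 < s by exact: lt_le_trans tp ts.
rewrite (Dform (lt0r_neq0 sp)) (Dform tn0).
have ch := cheb al v0 t0 ts.
rewrite (KA2 v al0 t) (KA2 v al0 s) (KG2 v al0 s) (KG2 v al0 t) in ch.
rewrite /GG.
move: ch.
move: (\int[mu]_(y in D) (gg v (s - y) * ww al v y)) (\int[mu]_(y in D) (gg v (t - y) * ww al v y))
      (\int[mu]_(y in D) gg v (s - y)) (\int[mu]_(y in D) gg v (t - y)) => As At Gs Gt ch.
have -> : - (s / v * As) * (k * Gt) * - t + - (t / v * At) * (k * Gs) * s =
          (k * (s * t / v)) * (As * Gt - At * Gs).
  by field; rewrite (vn0 v0).
apply: mulr_ge0; first by apply: mulr_ge0 => //; apply: divr_ge0; [apply: mulr_ge0; exact: ltW|exact: ltW].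
rewrite subr_ge0.
have : 4 * (At * Gs) <= 4 * (As * Gt).
  by move: ch; rewrite !mulrA; move=> ch; rewrite -[4](_ : 2 * 2 = 4) //; nra.
by rewrite ler_pM2l.
Qed.
End R6.

Theorem mainTheorem12 (R : realType) (alpha sigma : R) :
  0 < alpha -> 0 < sigma -> sigma ^+ 2 <= alpha ^+ 2 / 24 ->
  forall s t : R, 0 <= t -> t <= s -> 0 <= Ccal alpha sigma (s, t).
Proof.
move=> al0 sg0 _ s t t0 ts.
have v0 : 0 < sigma ^+ 2 by rewrite exprn_gt0.
rewrite /Ccal /dot2 /grad2 /rotJ /=.
set k := (2 * pi * sigma ^+ 2)^-1.
have k0 : 0 <= k by rewrite invr_ge0 ltW // !mulr_gt0 // pi_gt0.
have e1 : (fun s0 => conv2 (phi2 (sigma ^+ 2)) (uustar (u_ind alpha)) (s0, t)) =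
          (fun s0 => GG alpha (sigma ^+ 2) s0 * (k * GG alpha (sigma ^+ 2) t)).
  apply/funext => s0; rewrite (conv_eq alpha v0) /=.
  by move: (GG alpha (sigma ^+ 2) s0) (GG alpha (sigma ^+ 2) t) => a b; rewrite /k; ring.
have e2 : (fun t0 => conv2 (phi2 (sigma ^+ 2)) (uustar (u_ind alpha)) (s, t0)) =
          (fun t0 => GG alpha (sigma ^+ 2) t0 * (k * GG alpha (sigma ^+ 2) s)).
  apply/funext => t1; rewrite (conv_eq alpha v0) /=.
  by move: (GG alpha (sigma ^+ 2) t1) (GG alpha (sigma ^+ 2) s) => a b; rewrite /k; ring.
rewrite e1 e2.
have [ds d1] := GG_der (sigma ^+ 2) al0 s.
have [dt d2] := GG_der (sigma ^+ 2) al0 t.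
rewrite (@derive1Mr _ (GG alpha (sigma ^+ 2)) s (k * GG alpha (sigma ^+ 2) t) ds).
rewrite (@derive1Mr _ (GG alpha (sigma ^+ 2)) t (k * GG alpha (sigma ^+ 2) s) dt) d1 d2.
exact: key.
Qed.
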